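(* Suppose $n=3$. Then $x\sigma(x)+\sigma(x)\sigma^2(x)+\sigma^2(x)x=0$ and $N_\mathbb{K}(x+\sigma(x))=-N_\mathbb{K}(x)$.
   Context: Let $n=3$ and $p$ a prime with $p\equiv 1 \pmod 3$. Let $\zeta_p=e^{2\pi i/p}$, let $r$ be a primitive root modulo $p$, and let $\sigma$ be the automorphism of $\mathbb{Q}(\zeta_p)$ with $\sigma(\zeta_p)=\zeta_p^r$. Let $\mathbb{K}=\{y\in\mathbb{Q}(\zeta_p):\sigma^3(y)=y\}$, a cubic field. Let $\alpha=\prod_{j=0}^{(p-3)/2}(1-\zeta_p^{r^j})$, $\lambda$ an integer with $\lambda(r-1)\equiv1\pmod p$, $z=\zeta_p^{\lambda}\alpha(1-\zeta_p)$, $x=\mathrm{Tr}_{\mathbb{Q}(\zeta_p)/\mathbb{K}}(z)=\sum_{j=1}^{(p-1)/3}\sigma^{3j}(z)$. $N_\mathbb{K}$ is the norm from $\mathbb{K}$ to $\mathbb{Q}$. *)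

(* Defs.v *)
From HB Require Import structures.
From mathcomp Require Import all_boot all_order all_algebra all_field.
Set Implicit Arguments. Unset Strict Implicit. Unset Printing Implicit Defensive.
Import Order.TTheory GRing.Theory Num.Theory.
Local Open Scope ring_scope.

(* zeta_p = e^{2 pi i/p}: p.-root (-1) is the p-th root of -1 with minimal
   nonnegative argument, i.e. e^{i pi/p}; its square is e^{2 pi i/p}. *)
Definition zeta (p : nat) : algC := (p.-root (-1)) ^+ 2.

Definition alpha (p r : nat) : algC :=
  \prod_(0 <= j < ((p - 3) %/ 2).+1) (1 - zeta p ^+ (r ^ j)).

Definition zz (p r : nat) (lam : int) : algC :=
  zeta p ^ lam * alpha p r * (1 - zeta p).

(* x = Tr_{Q(zeta)/K}(z) = sum_{j=1}^{(p-1)/3} sigma^{3j}(z) *)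
Definition xx (p r : nat) (lam : int) (sigma : algC -> algC) : algC :=
  \sum_(1 <= j < ((p - 1) %/ 3).+1) iter (3 * j) sigma (zz p r lam).

(* Norm from the cubic field K (fixed field of sigma^3) to Q:
   product over Gal(K/Q) = {1, sigma, sigma^2} restricted to K. *)
Definition normK (sigma : algC -> algC) (y : algC) : algC :=
  y * sigma y * sigma (sigma y).

(* Main.v *)
Require Import Defs.
From HB Require Import structures.
From mathcomp Require Import all_boot all_order all_algebra all_field.
From mathcomp Require Import zify ring.
Import Order.TTheory GRing.Theory Num.Theory.
Local Open Scope ring_scope.
Set Implicit Arguments. Unset Strict Implicit.
Lemma rootN1_neqN1 (p : nat) : (1 < p)%N -> odd p -> p.-root (-1 : algC) != -1.
Proof.
move=> p_gt1 p_odd; apply/eqP=> rho1.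
have [xi xi_prim] := C_prim_root_exists (ltnW p_gt1).
have xip := prim_expr_order xi_prim.
have xi_ne1 : xi != 1.
  apply/eqP=> xi1; have := eq_prim_root_expr xi_prim 1 0.
  by rewrite expr1 expr0 xi1 eqxx modn_small // mod0n => /esym/eqP.
have p_gt0 : (0 < p)%N by apply: ltnW.
have algRe1 : 'Re (1 : algC) = 1 by apply/Creal_ReP; rewrite real1.
have : 1 <= 'Re xi.
  have [imge|imlt] := boolP (0 <= 'Im xi).
    have h : (- xi^*) ^+ p = -1.
      by rewrite exprNn -signr_odd p_odd expr1 -rmorphXn xip rmorph1 mulN1r.
    have := rootC_Re_max p_gt0 h; rewrite !raddfN /= Im_conj opprK => /(_ imge).
    by rewrite rho1 !raddfN /= Re_conj algRe1 lerN2.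
  have h : (- xi) ^+ p = -1.
    by rewrite exprNn -signr_odd p_odd expr1 xip mulN1r.
  have := rootC_Re_max p_gt0 h; rewrite raddfN /= oppr_ge0.
  have imr : 'Im xi \is Num.real by apply: Creal_Im.
  have : 'Im xi <= 0 by move: imlt; rewrite -real_ltNge ?real0 // => /ltW.
  move=> h2 /(_ h2).
  by rewrite rho1 !raddfN /= algRe1 lerN2.
move=> re1.
have nx : `|xi| = 1.
  apply/eqP; rewrite -(pexpr_eq1 p_gt0) ?normr_ge0 // -normrX xip normr1 //.
have := normC2_Re_Im xi; rewrite nx expr1n => h.
have reR : 'Re xi \is Num.real by apply: Creal_Re.
have imR : 'Im xi \is Num.real by apply: Creal_Im.
have re2 : 1 <= 'Re xi ^+ 2.
  by rewrite -[1](expr1n _ 2) ler_pXn2r // ?nnegrE ?ler01 // (le_trans ler01).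
have im2 : 'Im xi ^+ 2 = 0.
  apply/eqP; rewrite eq_le -realEsqr imR andbT.
  by rewrite -(lerD2l ('Re xi ^+ 2)) addr0 -h.
move/eqP: im2; rewrite sqrf_eq0 => /eqP im0.
move: h; rewrite im0 expr0n /= addr0 => /esym/eqP; rewrite sqrf_eq1 => /orP[] /eqP re.
  by move/eqP: xi_ne1; apply; rewrite [xi]algCrect re im0 mulr0 addr0.
by move: re1; rewrite re; apply/negP; rewrite -real_ltNge ?realN ?real1 // (lt_trans (ltrN10 _)) ?ltr01.
Qed.

Lemma zeta_prim (p : nat) : prime p -> odd p -> p.-primitive_root (zeta p).
Proof.
move=> pp p_odd; have p_gt1 := prime_gt1 pp; have p_gt0 := prime_gt0 pp.
have rp : (p.-root (-1 : algC)) ^+ p = -1 by apply: rootCK.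
have zp : zeta p ^+ p = 1 by rewrite /zeta exprAC rp sqrrN expr1n.
have [m mprim mdvd] := prim_order_exists p_gt0 zp.
have [m1|m_ne1] := eqVneq m 1%N.
  move: mprim; rewrite m1 => /prim_expr_order; rewrite expr1 /zeta => /eqP.
  rewrite sqrf_eq1 => /orP[] /eqP r1.
    by move: rp; rewrite r1 expr1n => /eqP; rewrite -subr_eq0 opprK -(natrD _ 1 1) pnatr_eq0.
  by move/eqP: (rootN1_neqN1 p_gt1 p_odd); rewrite r1.
by move: mprim; rewrite ((prime_nt_dvdP pp m_ne1) mdvd).
Qed.

Lemma zeta_p (p : nat) : prime p -> odd p -> zeta p ^+ p = 1.
Proof. move=> pp po; exact: (prim_expr_order (zeta_prim pp po)). Qed.

Lemma zeta_neq0 (p : nat) : prime p -> odd p -> zeta p != 0.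
Proof.
move=> pp po; apply/negP=> /eqP z0; have := zeta_p pp po.
by rewrite z0 expr0n gtn_eqF ?prime_gt0 // => /eqP; rewrite eq_sym oner_eq0.
Qed.

Lemma zeta_modn (p : nat) a b : prime p -> odd p -> (a = b %[mod p])%N ->
  zeta p ^+ a = zeta p ^+ b.
Proof.
move=> pp po ab; apply/eqP; rewrite (eq_prim_root_expr (zeta_prim pp po)).
by apply/eqP.
Qed.

Lemma zeta_z (p : nat) (a b : int) : prime p -> odd p -> (p%:Z %| a - b)%Z ->
  zeta p ^ a = zeta p ^ b.
Proof.
move=> pp po /dvdzP[q hq].
have ha : a = b + q * p%:Z by rewrite -hq addrC subrK.
have zu : zeta p \is a GRing.unit by rewrite unitfE zeta_neq0.
by rewrite ha exprzDr // [q * _]mulrC -exprz_exp -exprnP zeta_p // exp1rz mulr1.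
Qed.

Lemma zeta_geo (p : nat) : prime p -> odd p -> \sum_(i < p) zeta p ^+ i = 0.
Proof.
move=> pp po; have := subrX1 (zeta p) p; rewrite zeta_p // subrr => /esym/eqP.
rewrite mulf_eq0 subr_eq0 => /orP[/eqP z1|/eqP //].
have := eq_prim_root_expr (zeta_prim pp po) 1 0.
by rewrite expr1 expr0 z1 eqxx modn_small ?prime_gt1 // mod0n.
Qed.

Lemma Fp_eqP (p : nat) (a b : nat) : prime p ->
  ((a%:R : 'F_p) == b%:R) = (a == b %[mod p])%N.
Proof.
move=> pp; apply/eqP/eqP => [h|h].
  by have := congr1 (@nat_of_ord _) h; rewrite !val_Fp_nat.
by apply: ord_inj; rewrite !val_Fp_nat.
Qed.

Lemma r_pow_inj (p r : nat) a b : prime p ->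
  (p.-1).-primitive_root (r%:R : 'F_p) ->
  (r ^ a = r ^ b %[mod p])%N -> (a = b %[mod p.-1])%N.
Proof.
move=> pp rprim h; apply/eqP; rewrite -(eq_prim_root_expr rprim) -!natrX.
by rewrite Fp_eqP // h.
Qed.

Lemma r_pow_n (p r : nat) : prime p ->
  (p.-1).-primitive_root (r%:R : 'F_p) -> (r ^ p.-1 = 1 %[mod p])%N.
Proof.
move=> pp rprim; apply/eqP; rewrite -Fp_eqP // natrX.
by rewrite (prim_expr_order rprim).
Qed.

Lemma Fp_N1 (p : nat) : prime p -> ((p.-1)%:R : 'F_p) = -1.
Proof.
move=> pp; apply/eqP; rewrite -subr_eq0 opprK -(natrD _ _ 1) addn1 prednK ?prime_gt0 //.
by rewrite pchar_Fp_0.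
Qed.

Lemma r_half (p r h : nat) : prime p ->
  (p.-1).-primitive_root (r%:R : 'F_p) -> (h * 2 = p.-1)%N ->
  ((r ^ h)%:R : 'F_p) = -1.
Proof.
move=> pp rprim hh.
have y2 : ((r%:R : 'F_p) ^+ h) ^+ 2 = 1 by rewrite -exprM hh (prim_expr_order rprim).
have hpos : (0 < h)%N by move: hh (prime_gt1 pp); lia.
rewrite natrX; move/eqP: y2; rewrite sqrf_eq1 => /orP[/eqP y1|/eqP //].
have := eq_prim_root_expr rprim h 0; rewrite expr0 y1 eqxx mod0n modn_small.
  by move/esym/eqP; lia.
by lia.
Qed.

Lemma sum_Fp (p : nat) : prime p -> odd p ->
  \sum_(a : 'F_p) zeta p ^+ (a : nat) = 0.
Proof.
move=> pp po.
change (\sum_(a < (Zp_trunc (pdiv p)).+2) zeta p ^+ a = 0).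
rewrite -(big_mkord xpredT (fun i => zeta p ^+ i)) Fp_cast // big_mkord.
exact: zeta_geo.
Qed.

Lemma sum_orbit (p r m c : nat) : prime p -> odd p ->
  (p.-1).-primitive_root (r%:R : 'F_p) -> p.-1 = (3 * m)%N ->
  (c%:R : 'F_p) != 0 ->
  \sum_(k < 3) \sum_(j < m) zeta p ^+ (c * r ^ (3 * j + k)) = -1.
Proof.
move=> pp po rprim pm cnz.
rewrite pair_bigA /=.
pose phi := fun u : 'I_3 * 'I_m => ((c * r ^ (3 * u.2 + u.1))%:R : 'F_p).
rewrite (eq_bigr (fun u => zeta p ^+ (phi u : nat))); last first.
  by move=> u _; rewrite /phi val_Fp_nat //; apply: zeta_modn => //; rewrite modn_mod.
have rnz : (r%:R : 'F_p) != 0.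
  by rewrite (prim_root_eq0 rprim) pm; move: pm (prime_gt1 pp); lia.
have inj : injective phi.
  move=> [k j] [k' j']; rewrite /phi /= !natrM => /(mulfI cnz) /eqP.
  rewrite Fp_eqP // => /eqP /(r_pow_inj pp rprim).
  rewrite pm !modn_small; try by move: (ltn_ord k) (ltn_ord j) (ltn_ord k') (ltn_ord j'); lia.
  move=> h; have [ek ej] : k = k' :> nat /\ j = j' :> nat.
    by move: h (ltn_ord k) (ltn_ord k'); lia.
  by rewrite (ord_inj ek) (ord_inj ej).
have -> : \sum_u zeta p ^+ (phi u : nat) =
          \sum_(a in phi @: setT) zeta p ^+ (a : nat).
  by rewrite big_imset /=; [apply: eq_bigl => u; rewrite inE | move=> ? ? _ _; apply: inj].
have im : phi @: setT = ~: [set 0].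
  apply/eqP; rewrite eqEcard; apply/andP; split.
    apply/subsetP => a /imsetP [u _ ->]; rewrite !inE /phi natrM mulf_neq0 //.
    by rewrite natrX expf_neq0.
  rewrite cardsC1 card_Fp // card_imset // cardsT card_prod !card_ord -pm.
  by [].
rewrite im.
have := sum_Fp pp po; rewrite (bigD1 0) //= expr0 => h.
rewrite (eq_bigl (fun a => a != 0)); last by move=> a; rewrite !inE.
move: h; set S := \sum_(_ | _) _ => h.
by rewrite -[S](addKr 1) h addr0.
Qed.

Lemma shift1 (F : nat -> algC) m : (forall j, F (j + m)%N = F j) ->
  \sum_(0 <= j < m) F j.+1 = \sum_(0 <= j < m) F j.
Proof.
move=> Fp; apply: (addIr (F 0%N)).
rewrite addrC -big_nat_recl // big_nat_recr //=.
by rewrite -{2}[m]add0n Fp.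
Qed.

Lemma shiftc (F : nat -> algC) m c : (forall j, F (j + m)%N = F j) ->
  \sum_(0 <= j < m) F (j + c)%N = \sum_(0 <= j < m) F j.
Proof.
elim: c F => [|c IH] F Fp; first by apply: eq_bigr => j _; rewrite addn0.
rewrite -(IH F Fp) -(@shift1 (fun j => F (j + c)%N) m); last first.
  by move=> j; rewrite /= addnAC Fp.
by apply: eq_bigr => j _; rewrite addSnnS.
Qed.

Lemma sign3 j c : (-1) ^+ (3 * j.+1 + c) = - (-1) ^+ (3 * j + c) :> algC.
Proof.
have -> : (3 * j.+1 + c = (3 * j + c) + 3)%N by lia.
rewrite exprD [(-1) ^+ 3]exprS [(-1) ^+ 2]exprS expr1 mulrN1 mulN1r opprK mulrN1.
by [].
Qed.

Lemma alt0 q c : \sum_(0 <= j < 2 * q) (-1) ^+ (3 * j + c) = 0 :> algC.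
Proof.
elim: q => [|q IH]; first by rewrite big_geq.
rewrite (_ : (2 * q.+1 = (2 * q).+2)%N); last by lia.
rewrite !big_nat_recr //= IH add0r sign3 addrN //.
Qed.

Definition G (p r i : nat) : algC := (-1) ^+ i * zeta p ^+ (r ^ i).
Definition Y (p r m k : nat) : algC := \sum_(0 <= j < m) G p r (3 * j + k).

Lemma G_period (p r q i : nat) : prime p -> odd p ->
  (p.-1).-primitive_root (r%:R : 'F_p) -> p.-1 = (6 * q)%N ->
  G p r (i + p.-1) = G p r i.
Proof.
move=> pp po rprim pq; rewrite /G.
have -> : zeta p ^+ (r ^ (i + p.-1)) = zeta p ^+ (r ^ i).
  apply: zeta_modn => //; rewrite expnD -modnMmr r_pow_n // modnMmr muln1 //.
by rewrite exprD pq exprM -[(-1) ^+ 6]signr_odd /= expr0 expr1n mulr1.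
Qed.

Lemma GG (p r i t : nat) :
  G p r i * G p r (i + t) = (-1) ^+ t * zeta p ^+ ((1 + r ^ t) * r ^ i).
Proof.
rewrite /G mulrACA -exprD -exprD -(signr_odd _ (i + (i + t))%N) !oddD addbA addbb /=.
by rewrite signr_odd expnD mulnDl mul1n [(r ^ t * _)%N]mulnC.
Qed.

Lemma Y3 (p r q : nat) : prime p -> odd p ->
  (p.-1).-primitive_root (r%:R : 'F_p) -> p.-1 = (6 * q)%N ->
  Y p r (2 * q) 3 = Y p r (2 * q) 0.
Proof.
move=> pp po rprim pq; rewrite /Y -(@shift1 (fun j => G p r (3 * j + 0)) (2 * q)).
  by apply: eq_bigr => j _; congr G; lia.
move=> j /=; rewrite (_ : (3 * (j + 2 * q) + 0 = (3 * j + 0) + p.-1)%N).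
  exact: G_period pp po rprim pq.
by lia.
Qed.

Lemma YY (p r q k : nat) : prime p -> odd p ->
  (p.-1).-primitive_root (r%:R : 'F_p) -> p.-1 = (6 * q)%N ->
  Y p r (2 * q) k * Y p r (2 * q) k.+1 =
  \sum_(0 <= s < 2 * q) \sum_(0 <= j < 2 * q)
     (-1) ^+ (3 * s + 1) * zeta p ^+ ((1 + r ^ (3 * s + 1)) * r ^ (3 * j + k)).
Proof.
move=> pp po rprim pq.
have Hs : forall j, Y p r (2 * q) k.+1 =
    \sum_(0 <= s < 2 * q) G p r (3 * (s + j) + k.+1).
  move=> j; rewrite /Y -(@shiftc (fun s => G p r (3 * s + k.+1)) (2 * q) j) //.
  move=> s /=; rewrite (_ : (3 * (s + 2 * q) + k.+1 = 3 * s + k.+1 + p.-1)%N).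
    exact: G_period pp po rprim pq.
  by lia.
rewrite [RHS]exchange_big /= {1}/Y big_distrl /=; apply: eq_bigr => j _.
rewrite (Hs j) big_distrr /=; apply: eq_bigr => s _.
rewrite (_ : (3 * (s + j) + k.+1 = (3 * j + k) + (3 * s + 1))%N) ?GG //.
by lia.
Qed.

Lemma nondiv (p r q s : nat) : prime p -> odd p ->
  (p.-1).-primitive_root (r%:R : 'F_p) -> p.-1 = (6 * q)%N -> (s < 2 * q)%N ->
  ((1 + r ^ (3 * s + 1))%:R : 'F_p) != 0.
Proof.
move=> pp po rprim pq sq; apply/eqP => h.
have h' : ((r ^ (3 * s + 1))%:R : 'F_p) = (r ^ (3 * q))%:R.
  rewrite (r_half pp rprim (h := (3 * q)%N)); last by lia.
  by move/eqP: h; rewrite natrD addrC addr_eq0 => /eqP.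
move/eqP: h'; rewrite Fp_eqP // => /eqP /(r_pow_inj pp rprim).
rewrite pq !modn_small; by lia.
Qed.

Lemma core (p r q : nat) : prime p -> odd p ->
  (p.-1).-primitive_root (r%:R : 'F_p) -> p.-1 = (6 * q)%N ->
  let Y0 := Y p r (2 * q) 0 in let Y1 := Y p r (2 * q) 1 in
  let Y2 := Y p r (2 * q) 2 in
  Y0 * Y1 + Y1 * Y2 + Y2 * Y0 = 0.
Proof.
move=> pp po rprim pq /=.
rewrite -{2}(Y3 pp po rprim pq) (YY 0 pp po rprim pq) (YY 1 pp po rprim pq) (YY 2 pp po rprim pq) -!big_split /=.
rewrite (eq_big_nat _ _ (F2 := fun s => (-1) ^+ (3 * s + 1) * -1)).
  under eq_bigr do rewrite -exprSr -addnS.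
  exact: alt0.
move=> s /andP [_ sq].
rewrite -!big_distrr -!mulrDr; congr (_ * _).
have pm : p.-1 = (3 * (2 * q))%N by lia.
rewrite -(sum_orbit pp po rprim pm (nondiv pp po rprim pq sq)).
rewrite !big_ord_recr big_ord0 /= add0r !big_mkord.
by [].
Qed.

Lemma arith (p : nat) : prime p -> (p %% 3 = 1)%N ->
  exists q, [/\ p.-1 = (6*q)%N, (0 < q)%N, ((p-1)%/3 = 2*q)%N & (((p-3)%/2).+1 = 3*q)%N].
Proof.
move=> pp p3; have [p2|podd] := even_prime pp; first by rewrite p2 in p3.
have p2 : (p %% 2 = 1)%N by rewrite modn2 podd.
have p1 := prime_gt1 pp; rewrite -subn1; exists ((p-1) %/ 6)%N; split; lia.
Qed.

Lemma sig_alpha (p r q : nat) (sigma : {rmorphism algC -> algC}) : prime p -> odd p ->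
  (p.-1).-primitive_root (r%:R : 'F_p) -> p.-1 = (6 * q)%N ->
  (((p-3)%/2).+1 = 3*q)%N ->
  sigma (zeta p) = zeta p ^+ r ->
  sigma (alpha p r) = - zeta p ^+ p.-1 * alpha p r.
Proof.
move=> pp po rprim pq hq hs.
have z1 : 1 - zeta p != 0.
  rewrite subr_eq0; apply/eqP => z1; have := eq_prim_root_expr (zeta_prim pp po) 1 0.
  by rewrite expr1 expr0 -z1 eqxx modn_small ?prime_gt1 // mod0n.
apply: (mulfI z1).
have sa : sigma (alpha p r) = \prod_(0 <= j < ((p - 3) %/ 2).+1) (1 - zeta p ^+ (r ^ j.+1)).
  rewrite /alpha rmorph_prod; apply: eq_bigr => j _.
  by rewrite rmorphB rmorph1 rmorphXn hs -exprM expnS.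
have hh : zeta p ^+ (r ^ (((p-3)%/2).+1)) = zeta p ^+ p.-1.
  apply: zeta_modn => //; apply/eqP; rewrite -Fp_eqP // Fp_N1 //.
  by rewrite hq (r_half pp rprim) //; lia.
have := big_nat_recl (((p - 3) %/ 2).+1) 0 (fun j => 1 - zeta p ^+ (r ^ j)) (op := *%R) (idx := 1) isT.
rewrite big_nat_recr //= -/(alpha p r) -sa expn0 expr1 hh => <-.
have zz : zeta p ^+ p.-1 * zeta p = 1.
  by rewrite -exprSr prednK ?prime_gt0 // zeta_p.
have e : 1 - zeta p ^+ p.-1 = (1 - zeta p) * (- zeta p ^+ p.-1).
  by rewrite mulrBl mul1r mulrN [_ * zeta p ^+ _]mulrC zz opprK addrC.
rewrite e; ring.
Qed.

Lemma sig_w (p r q : nat) (lam : int) (sigma : {rmorphism algC -> algC}) :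
  prime p -> odd p ->
  (p.-1).-primitive_root (r%:R : 'F_p) -> p.-1 = (6 * q)%N ->
  (((p-3)%/2).+1 = 3*q)%N ->
  (lam * (r%:Z - 1) = 1 %[mod p%:Z])%Z ->
  sigma (zeta p) = zeta p ^+ r ->
  sigma (zeta p ^ lam * alpha p r) = - (zeta p ^ lam * alpha p r).
Proof.
move=> pp po rprim pq hq hl hs.
have zu : zeta p \is a GRing.unit by rewrite unitfE zeta_neq0.
rewrite rmorphM (sig_alpha pp po rprim pq hq hs) rmorphXz // hs.
rewrite exprnP exprz_exp mulrA mulrN mulNr; congr (- (_ * _)).
rewrite exprnP -exprzDr //; apply: zeta_z => //.
have : (lam * (r%:Z - 1) == 1 %[mod p%:Z])%Z by apply/eqP.
rewrite eqz_mod_dvd => hd.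
have -> : r%:Z * lam + (p.-1)%:Z - lam = (lam * (r%:Z - 1) - 1) + p%:Z.
  rewrite predn_int ?prime_gt0 //; ring.
by apply: rpredD => //; apply: dvdzz.
Qed.

Lemma iter_z (p r q : nat) (lam : int) (sigma : {rmorphism algC -> algC}) :
  prime p -> odd p ->
  (p.-1).-primitive_root (r%:R : 'F_p) -> p.-1 = (6 * q)%N ->
  (((p-3)%/2).+1 = 3*q)%N ->
  (lam * (r%:Z - 1) = 1 %[mod p%:Z])%Z ->
  sigma (zeta p) = zeta p ^+ r -> forall k,
  iter k sigma (zz p r lam) =
    (-1) ^+ k * (zeta p ^ lam * alpha p r) * (1 - zeta p ^+ (r ^ k)).
Proof.
move=> pp po rprim pq hq hl hs; elim => [|k IH].
  by rewrite /= expn0 expr1 expr0 mul1r /zz.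
rewrite iterS IH rmorphM (rmorphM _ ((-1) ^+ k)) rmorph_sign (sig_w pp po rprim pq hq hl hs).
rewrite rmorphB rmorph1 rmorphXn hs -exprM -expnS exprS.
ring.
Qed.

Definition S (p r : nat) (lam : int) (sigma : algC -> algC) (m k : nat) : algC :=
  \sum_(1 <= j < m.+1) iter (3 * j + k) sigma (zz p r lam).

Lemma sig_S (p r : nat) (lam : int) (sigma : {rmorphism algC -> algC}) m k :
  sigma (S p r lam sigma m k) = S p r lam sigma m k.+1.
Proof.
by rewrite /S rmorph_sum; apply: eq_bigr => j _; rewrite addnS -iterS.
Qed.

Lemma S_eq (p r q : nat) (lam : int) (sigma : {rmorphism algC -> algC}) :
  prime p -> odd p ->
  (p.-1).-primitive_root (r%:R : 'F_p) -> p.-1 = (6 * q)%N ->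
  (((p-3)%/2).+1 = 3*q)%N ->
  (lam * (r%:Z - 1) = 1 %[mod p%:Z])%Z ->
  sigma (zeta p) = zeta p ^+ r -> forall k,
  S p r lam sigma (2 * q) k = - (zeta p ^ lam * alpha p r) * Y p r (2 * q) k.
Proof.
move=> pp po rprim pq hq hl hs k.
set w := zeta p ^ lam * alpha p r.
rewrite /S big_add1 succnK.
rewrite (eq_bigr (fun j => w * (-1) ^+ (3 * j.+1 + k) - w * G p r (3 * j.+1 + k))); last first.
  by move=> j _; rewrite (iter_z pp po rprim pq hq hl hs) /G -/w; ring.
rewrite sumrB -!mulr_sumr.
have -> : \sum_(0 <= i < 2 * q) (-1) ^+ (3 * i.+1 + k) = 0 :> algC.
  rewrite -[RHS](alt0 q (k + 3)); apply: eq_bigr => j _; congr (_ ^+ _); lia.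
have h := @shift1 (fun j => G p r (3 * j + k)) (2 * q).
rewrite /= in h; rewrite h; first by rewrite mulr0 sub0r mulNr.
move=> j; rewrite (_ : (3 * (j + 2 * q) + k = 3 * j + k + p.-1)%N).
  exact: G_period pp po rprim pq.
by lia.
Qed.

Unset Implicit Arguments. Set Strict Implicit.

Theorem mainTheorem9 (p r : nat) (lam : int) (sigma : {rmorphism algC -> algC}) :
  prime p -> (p %% 3 = 1)%N ->
  (p.-1).-primitive_root (r%:R : 'F_p) ->
  (lam * (r%:Z - 1) = 1 %[mod p%:Z])%Z ->
  sigma (zeta p) = zeta p ^+ r ->
  let x := xx p r lam sigma in
  x * sigma x + sigma x * sigma (sigma x) + sigma (sigma x) * x = 0 /\
  normK sigma (x + sigma x) = - normK sigma x.
Proof.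
move=> pp p3 rprim hl hs x.
have [q [pq q0 hm hq]] := arith pp p3.
have po : odd p.
  have [p2|//] := even_prime pp; by rewrite p2 in p3.
have hx : x = S p r lam sigma (2 * q) 0.
  rewrite /x /xx hm; apply: eq_bigr => j _; by rewrite addn0.
set w := zeta p ^ lam * alpha p r.
have e0 : x = - w * Y p r (2 * q) 0 by rewrite hx (S_eq pp po rprim pq hq hl hs).
have e1 : sigma x = - w * Y p r (2 * q) 1.
  by rewrite hx sig_S (S_eq pp po rprim pq hq hl hs).
have e2 : sigma (sigma x) = - w * Y p r (2 * q) 2.
  by rewrite hx !sig_S (S_eq pp po rprim pq hq hl hs).
have e3 : sigma (sigma (sigma x)) = x.
  by rewrite {1}hx !sig_S (S_eq pp po rprim pq hq hl hs) (Y3 pp po rprim pq) e0.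
have c := core pp po rprim pq; rewrite /= in c.
have E : x * sigma x + sigma x * sigma (sigma x) + sigma (sigma x) * x = 0.
  rewrite e2 e1 e0.
  transitivity (w ^+ 2 * (Y p r (2 * q) 0 * Y p r (2 * q) 1 +
     Y p r (2 * q) 1 * Y p r (2 * q) 2 + Y p r (2 * q) 2 * Y p r (2 * q) 0)).
    ring.
  by rewrite c mulr0.
split => //.
rewrite /normK !rmorphD e3.
move: E; set a := x; set b := sigma x; set c' := sigma (sigma x) => E.
transitivity ((a + b + c') * (a * b + b * c' + c' * a) - a * b * c'); first by ring.
by rewrite E mulr0 sub0r.
Qed.
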